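(* Let $\Bbbk$ be a field of characteristic $2$, $G=\langle\sigma\rangle$ cyclic of order $4$ acting on $V=V_3$ with $\sigma x_1=x_1+x_2$, $\sigma x_2=x_2+x_3$, $\sigma x_3=x_3$ on the dual basis, and $A=\Bbbk[N^G(x_1),\ x_2(x_2+x_3),\ x_3]$ with $N^G(x_1)=\prod_{i=0}^3\sigma^i(x_1)$. Then $K_4=\ker(\Delta^4)=\Bbbk[V]$ is a free $A$-module with basis $\{1,\ x_1,\ x_2,\ x_1^2,\ x_1x_2,\ x_1^3,\ x_1^2x_2,\ x_1^3x_2\}$.
   Context: $\Delta=\sigma-\iota\in\Bbbk G$ acting on $\Bbbk[V]=\Bbbk[x_1,x_2,x_3]$; note $\Delta^4=\sigma^4-\iota=0$ in characteristic $2$. *)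

(* Defs.v *)
From mathcomp Require Import all_boot all_order all_algebra.
From mathcomp Require Import mpoly.
Set Implicit Arguments. Unset Strict Implicit. Unset Printing Implicit Defensive.
Import GRing.Theory.
Local Open Scope ring_scope.

Section Defs.
Variable k : fieldType.
Notation P := {mpoly k[3]}.

Definition x1 : P := 'X_(@Ordinal 3 0 isT).
Definition x2 : P := 'X_(@Ordinal 3 1 isT).
Definition x3 : P := 'X_(@Ordinal 3 2 isT).

Definition sigma (f : P) : P := f \mPo [tuple x1 + x2; x2 + x3; x3].

Definition Delta (f : P) : P := sigma f - f.

Definition K4 : pred P := fun f => iter 4 Delta f == 0.

Definition normx1 : P := \prod_(i < 4) iter i sigma x1.

(* A = k[N^G(x1), x2(x2+x3), x3]: the k-subalgebra generated by the three elements,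
   i.e. the image of polynomial evaluation at these generators *)
Definition inA (a : P) : Prop :=
  exists q : {mpoly k[3]}, a = q \mPo [tuple normx1; x2 * (x2 + x3); x3].

Definition basisB : 8.-tuple P :=
  [tuple 1; x1; x2; x1 ^+ 2; x1 * x2; x1 ^+ 3; x1 ^+ 2 * x2; x1 ^+ 3 * x2].

Definition free_A_basis (M : pred P) (b : 8.-tuple P) : Prop :=
  (forall i, tnth b i \in M) /\
  (forall f, f \in M -> exists a : 'I_8 -> P,
       (forall i, inA (a i)) /\ f = \sum_(i < 8) a i * tnth b i) /\
  (forall a : 'I_8 -> P, (forall i, inA (a i)) ->
       \sum_(i < 8) a i * tnth b i = 0 -> forall i, a i = 0).
End Defs.

(* Main.v *)
Require Import Defs.
From mathcomp Require Import all_boot all_order all_algebra.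
From mathcomp Require Import mpoly ring.
Set Implicit Arguments. Unset Strict Implicit. Unset Printing Implicit Defensive.
Import GRing.Theory.
Local Open Scope ring_scope.

Section Proof.
Variable k : fieldType.
Hypothesis h2 : (2%:R : {mpoly k[3]}) = 0.
Local Notation P := {mpoly k[3]}.
Local Notation X1 := (x1 k).
Local Notation X2 := (x2 k).
Local Notation X3 := (x3 k).
Local Notation N := (normx1 k).
Local Notation Y := (X2 * (X2 + X3)).

Lemma compA (p : P) (L M : 3.-tuple P) :
  (p \mPo L) \mPo M = p \mPo [tuple tnth L i \mPo M | i < 3].
Proof.
rewrite [p \mPo L]comp_mpolyE [p \mPo _]comp_mpolyE raddf_sum /=.
apply: eq_bigr => m _; rewrite comp_mpolyZ rmorph_prod /=; congr (_ *: _).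
by apply: eq_bigr => i _; rewrite rmorphXn /= tnth_mktuple.
Qed.

Lemma compT3 (p : P) (a b c : P) (M : 3.-tuple P) :
  (p \mPo [tuple a; b; c]) \mPo M = p \mPo [tuple a \mPo M; b \mPo M; c \mPo M].
Proof.
rewrite compA; congr (_ \mPo _); apply: eq_from_tnth => i.
rewrite tnth_mktuple; case: i => [[|[|[|//]]] Hi]; by rewrite /tnth /=.
Qed.

Lemma compM (S : 3.-tuple P) (a b : P) : (a * b) \mPo S = (a \mPo S) * (b \mPo S).
Proof. exact: rmorphM. Qed.
Lemma compXn (S : 3.-tuple P) (a : P) n : (a ^+ n) \mPo S = (a \mPo S) ^+ n.
Proof. exact: rmorphXn. Qed.
Lemma compn (S : 3.-tuple P) n : (n%:R : P) \mPo S = n%:R.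
Proof. exact: rmorph_nat. Qed.

Lemma cX1 (a b c : P) : X1 \mPo [tuple a; b; c] = a.
Proof. by rewrite /x1 comp_mpolyXU. Qed.
Lemma cX2 (a b c : P) : X2 \mPo [tuple a; b; c] = b.
Proof. by rewrite /x2 comp_mpolyXU. Qed.
Lemma cX3 (a b c : P) : X3 \mPo [tuple a; b; c] = c.
Proof. by rewrite /x3 comp_mpolyXU. Qed.

Lemma char2 (a b q : P) : a - b = 2%:R * q -> a = b.
Proof. by rewrite h2 mul0r => /eqP; rewrite subr_eq0 => /eqP. Qed.

Lemma normxE : N = X1 * (X1 + X2) * (X1 + X3) * (X1 + X2 + X3).
Proof.
rewrite /normx1 !big_ord_recl big_ord0 /= /sigma.
rewrite !(comp_mpolyD, cX1, cX2, cX3).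
rewrite mulr1 !mulrA; congr (_ * _ * _ * _).
  by apply: (@char2 _ _ X2); ring.
by apply: (@char2 _ _ (X2 + X3)); ring.
Qed.

Lemma C1 : X1 ^+ 4 = N - (X3 ^+ 2 + Y) * X1 ^+ 2 - Y * X3 * X1.
Proof.
rewrite normxE; apply: (@char2 _ _ (-(X1^+3*X2) + -(X1^+3*X3) + -(X1^+2*X2*X3))).
ring.
Qed.

Definition S1 : 3.-tuple P := [tuple X1 + X2; X2; X3].
Definition S2 : 3.-tuple P := [tuple X1 + X3; X2; X3].
Definition TT : 3.-tuple P := [tuple X1; X2 + X3; X3].

Lemma inv_of (S : 3.-tuple P) (a b c : P) :
  N \mPo S = N -> Y \mPo S = Y -> X3 \mPo S = X3 ->
  forall f, inA f -> f \mPo S = f.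
Proof.
move=> hN hY h3 f [q ->].
by rewrite compT3 hN hY h3.
Qed.

Lemma NS1 : N \mPo S1 = N.
Proof.
rewrite normxE /S1 !(compM, comp_mpolyD, cX1, cX2, cX3).
apply: (@char2 _ _ (2%:R*X1^+3*X2 + 6%:R*X1^+2*X2^+2 + 3%:R*X1^+2*X2*X3 + 6%:R*X1*X2^+3 + 6%:R*X1*X2^+2*X3 + X1*X2*X3^+2 + 2%:R*X2^+4 + 3%:R*X2^+3*X3 + X2^+2*X3^+2)).
ring.
Qed.
Lemma NS2 : N \mPo S2 = N.
Proof.
rewrite normxE /S2 !(compM, comp_mpolyD, cX1, cX2, cX3).
apply: (@char2 _ _ (2%:R*X1^+3*X3 + 3%:R*X1^+2*X2*X3 + 6%:R*X1^+2*X3^+2 + X1*X2^+2*X3 + 6%:R*X1*X2*X3^+2 + 6%:R*X1*X3^+3 + X2^+2*X3^+2 + 3%:R*X2*X3^+3 + 2%:R*X3^+4)).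
ring.
Qed.
Lemma NT : N \mPo TT = N.
Proof.
rewrite normxE /TT !(compM, comp_mpolyD, cX1, cX2, cX3).
apply: (@char2 _ _ (X1^+3*X3 + X1^+2*X2*X3 + 2%:R*X1^+2*X3^+2 + X1*X2*X3^+2 + X1*X3^+3)).
ring.
Qed.

Lemma invS1 f : inA f -> f \mPo S1 = f.
Proof.
apply: inv_of => //; first exact: NS1.
  by rewrite /S1 !(compM, comp_mpolyD, cX1, cX2, cX3).
by rewrite cX3.
Qed.
Lemma invS2 f : inA f -> f \mPo S2 = f.
Proof.
apply: inv_of => //; first exact: NS2.
  by rewrite /S2 !(compM, comp_mpolyD, cX1, cX2, cX3).
by rewrite cX3.
Qed.
Lemma invT f : inA f -> f \mPo TT = f.
Proof.
apply: inv_of => //; first exact: NT.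
  rewrite /TT !(compM, comp_mpolyD, cX1, cX2, cX3).
  by apply: (@char2 _ _ (X2*X3 + X3^+2)); ring.
by rewrite cX3.
Qed.

Lemma inA_C (c : k) : inA (c%:MP : P).
Proof. by exists c%:MP; rewrite comp_mpolyC. Qed.
Lemma inA0 : inA (0 : P).
Proof. by exists 0; rewrite comp_mpoly0. Qed.
Lemma inA1 : inA (1 : P).
Proof. by exists 1; rewrite comp_mpoly1. Qed.
Lemma inA_N : inA N.
Proof. by exists 'X_(@Ordinal 3 0 isT); rewrite comp_mpolyXU. Qed.
Lemma inA_Y : inA Y.
Proof. by exists 'X_(@Ordinal 3 1 isT); rewrite comp_mpolyXU. Qed.
Lemma inA_X3 : inA X3.
Proof. by exists 'X_(@Ordinal 3 2 isT); rewrite comp_mpolyXU. Qed.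
Lemma inA_add (a b : P) : inA a -> inA b -> inA (a + b).
Proof. by move=> [q ->] [r ->]; exists (q + r); rewrite comp_mpolyD. Qed.
Lemma inA_opp (a : P) : inA a -> inA (- a).
Proof. by move=> [q ->]; exists (- q); rewrite comp_mpolyN. Qed.
Lemma inA_mul (a b : P) : inA a -> inA b -> inA (a * b).
Proof. by move=> [q ->] [r ->]; exists (q * r); rewrite compM. Qed.
Lemma inA_exp (a : P) n : inA a -> inA (a ^+ n).
Proof. by move=> [q ->]; exists (q ^+ n); rewrite compXn. Qed.

Ltac inAt := repeat first [ assumption | apply: inA0 | apply: inA1 | apply: inA_N
  | apply: inA_Y | apply: inA_X3 | apply: inA_add | apply: inA_opp
  | apply: inA_mul | apply: inA_exp ].

Definition expr8 (a0 a1 a2 a3 a4 a5 a6 a7 : P) : P :=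
  a0 + a1 * X1 + a2 * X2 + a3 * X1 ^+ 2 + a4 * (X1 * X2) + a5 * X1 ^+ 3
  + a6 * (X1 ^+ 2 * X2) + a7 * (X1 ^+ 3 * X2).

Lemma sumB (a : 'I_8 -> P) : \sum_(i < 8) a i * tnth (basisB k) i =
  expr8 (a (inord 0)) (a (inord 1)) (a (inord 2)) (a (inord 3))
        (a (inord 4)) (a (inord 5)) (a (inord 6)) (a (inord 7)).
Proof.
rewrite (eq_bigr (fun i : 'I_8 => a (inord i) * nth 0 (basisB k) i)); last first.
  by move=> i _; rewrite inord_val (tnth_nth 0).
rewrite -(big_mkord xpredT (fun j => a (inord j) * nth 0 (basisB k) j)).
rewrite !big_nat_recl // big_geq // /= /expr8.
ring.
Qed.

Definition span (f : P) := exists a : 'I_8 -> P,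
  (forall i, inA (a i)) /\ f = \sum_(i < 8) a i * tnth (basisB k) i.

Lemma spanE (f a0 a1 a2 a3 a4 a5 a6 a7 : P) :
  inA a0 -> inA a1 -> inA a2 -> inA a3 -> inA a4 -> inA a5 -> inA a6 -> inA a7 ->
  f = expr8 a0 a1 a2 a3 a4 a5 a6 a7 -> span f.
Proof.
move=> h0 h1 h2' h3 h4 h5 h6 h7 ->.
exists (fun i : 'I_8 => nth 0 [:: a0; a1; a2; a3; a4; a5; a6; a7] i); split.
  by move=> [[|[|[|[|[|[|[|[|j]]]]]]]] Hj] //=.
by rewrite sumB !inordK.
Qed.

Lemma span_ind (Q : P -> Prop) f : span f ->
  (forall a0 a1 a2 a3 a4 a5 a6 a7, inA a0 -> inA a1 -> inA a2 -> inA a3 ->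
     inA a4 -> inA a5 -> inA a6 -> inA a7 -> Q (expr8 a0 a1 a2 a3 a4 a5 a6 a7)) ->
  Q f.
Proof. by move=> [a [Ha ->]] H; rewrite sumB; apply: H. Qed.

Lemma span_add f g : span f -> span g -> span (f + g).
Proof.
move=> sf sg; apply: (span_ind (Q := fun f => span (f + g)) sf) => a0 a1 a2 a3 a4 a5 a6 a7 ? ? ? ? ? ? ? ?.
apply: (span_ind (Q := fun g => span (_ + g)) sg) => b0 b1 b2 b3 b4 b5 b6 b7 ? ? ? ? ? ? ? ?.
apply: (spanE (a0 := a0 + b0) (a1 := a1 + b1) (a2 := a2 + b2) (a3 := a3 + b3)
  (a4 := a4 + b4) (a5 := a5 + b5) (a6 := a6 + b6) (a7 := a7 + b7)); try by inAt.
rewrite /expr8; ring.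
Qed.

Lemma span_mulA c f : inA c -> span f -> span (c * f).
Proof.
move=> hc sf; apply: (span_ind (Q := fun f => span (c * f)) sf) => a0 a1 a2 a3 a4 a5 a6 a7 ? ? ? ? ? ? ? ?.
apply: (spanE (a0 := c * a0) (a1 := c * a1) (a2 := c * a2) (a3 := c * a3)
  (a4 := c * a4) (a5 := c * a5) (a6 := c * a6) (a7 := c * a7)); try by inAt.
rewrite /expr8; ring.
Qed.

Lemma span_x2 f : span f -> span (X2 * f).
Proof.
move=> sf; apply: (span_ind (Q := fun f => span (X2 * f)) sf) => a0 a1 a2 a3 a4 a5 a6 a7 ? ? ? ? ? ? ? ?.
apply: (spanE (a0 := a2 * Y) (a1 := a4 * Y) (a2 := a0 - a2 * X3) (a3 := a6 * Y)
  (a4 := a1 - a4 * X3) (a5 := a7 * Y) (a6 := a3 - a6 * X3) (a7 := a5 - a7 * X3));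
  try by inAt.
rewrite /expr8; ring.
Qed.

Lemma span_x1 f : span f -> span (X1 * f).
Proof.
move=> sf; apply: (span_ind (Q := fun f => span (X1 * f)) sf) => a0 a1 a2 a3 a4 a5 a6 a7 ? ? ? ? ? ? ? ?.
apply: (spanE (a0 := a5 * N) (a1 := a0 - a5 * (Y * X3)) (a2 := a7 * N)
  (a3 := a1 - a5 * (X3 ^+ 2 + Y)) (a4 := a2 - a7 * (Y * X3)) (a5 := a3)
  (a6 := a4 - a7 * (X3 ^+ 2 + Y)) (a7 := a6)); try by inAt.
have -> : X1 * expr8 a0 a1 a2 a3 a4 a5 a6 a7 =
  expr8 (a5 * N) (a0 - a5 * (Y * X3)) (a7 * N)
  (a1 - a5 * (X3 ^+ 2 + Y)) (a2 - a7 * (Y * X3)) a3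
  (a4 - a7 * (X3 ^+ 2 + Y)) a6 +
  (a5 + a7 * X2) * (X1 ^+ 4 - (N - (X3 ^+ 2 + Y) * X1 ^+ 2 - Y * X3 * X1)).
  by rewrite /expr8; ring.
by rewrite C1 subrr mulr0 addr0.
Qed.

Lemma span1 : span 1.
Proof. by apply: (spanE (a0 := 1) (a1 := 0) (a2 := 0) (a3 := 0) (a4 := 0)
  (a5 := 0) (a6 := 0) (a7 := 0)); try by inAt; rewrite /expr8; ring. Qed.

Lemma span_x3 f : span f -> span (X3 * f).
Proof. by apply: span_mulA; inAt. Qed.

Lemma span_Xpow (i : 'I_3) e g : span g -> span ('X_i ^+ e * g).
Proof.
move=> sg; elim: e => [|e IH]; first by rewrite expr0 mul1r.
rewrite exprS -mulrA.
case: i IH => [[|[|[|//]]] Hi] IH.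
- by rewrite (bool_irrelevance Hi isT); apply: span_x1.
- by rewrite (bool_irrelevance Hi isT); apply: span_x2.
- by rewrite (bool_irrelevance Hi isT); apply: span_x3.
Qed.

Lemma span_all f : span f.
Proof.
elim/mpolyind: f => [|c m p _ _ sp].
  exists (fun _ => 0); split => [i|]; first exact: inA0.
  by rewrite big1 // => i _; rewrite mul0r.
apply: span_add => //; rewrite -mul_mpolyC; apply: span_mulA; first exact: inA_C.
rewrite mpolyXE_id !big_ord_recl big_ord0 mulr1 -[X in span X]mulr1.
by rewrite -!mulrA; do 3 apply: span_Xpow; apply: span1.
Qed.

Lemma nz_eval (p : P) (v : 'I_3 -> k) : p.@[v] != 0 -> p != 0.
Proof. by apply: contraNneq => ->; rewrite meval0. Qed.

Lemma X2_nz : X2 != 0.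
Proof. by apply: (@nz_eval _ (fun _ => 1)); rewrite /x2 mevalXU oner_neq0. Qed.
Lemma X3_nz : X3 != 0.
Proof. by apply: (@nz_eval _ (fun _ => 1)); rewrite /x3 mevalXU oner_neq0. Qed.
Lemma X23_nz : X2 + X3 != 0.
Proof.
apply: (@nz_eval _ (fun i : 'I_3 => if val i == 1%N then 1 else 0)).
by rewrite mevalD /x2 /x3 !mevalXU /= addr0 oner_neq0.
Qed.

Lemma cancelL (c a : P) : c != 0 -> c * a = 0 -> a = 0.
Proof. by move=> nz /eqP; rewrite mulf_eq0 (negbTE nz) /= => /eqP. Qed.

Lemma indepL (b0 b1 b2 b3 : P) : inA b0 -> inA b1 -> inA b2 -> inA b3 ->
  b0 + b1 * X1 + b2 * X1 ^+ 2 + b3 * X1 ^+ 3 = 0 ->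
  [/\ b0 = 0, b1 = 0, b2 = 0 & b3 = 0].
Proof.
move=> h0 h1 h2' h3 HE.
have HE' := congr1 (comp_mpoly S1) HE.
rewrite /= comp_mpoly0 !(compM, compXn, comp_mpolyD, cX1) !invS1 // in HE'.
pose E1 := b1 + b2 * (2%:R * X1 + X2) + b3 * (3%:R * X1 ^+ 2 + 3%:R * X1 * X2 + X2 ^+ 2).
have HE1 : E1 = 0.
  apply: (cancelL X2_nz).
  rewrite -(subrr 0) -{1}HE' -{1}HE /E1 /S1 /=; ring.
have HE1' := congr1 (comp_mpoly S2) HE1.
rewrite /E1 /= comp_mpoly0 !(compM, compXn, comp_mpolyD, compn, cX1, cX2)
  !invS2 // in HE1'.
have b3z : b3 = 0.
  apply: (cancelL (mulf_neq0 X3_nz X23_nz)).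
  rewrite -(subrr 0) -{1}HE1' -{1}HE1 /E1.
  by apply: (@char2 _ _ (-(b2*X3 + b3*(3%:R*X1*X3 + X3^+2 + X3*X2)))); ring.
have HF : b1 + b2 * X2 = 0.
  rewrite -HE1 /E1 b3z.
  by apply: (@char2 _ _ (-(b2*X1))); ring.
have HF' := congr1 (comp_mpoly TT) HF.
rewrite /= comp_mpoly0 !(compM, comp_mpolyD, cX2) !invT // in HF'.
have b2z : b2 = 0.
  apply: (cancelL X3_nz).
  by rewrite -(subrr 0) -{1}HF' -{1}HF; ring.
have b1z : b1 = 0 by rewrite -HF b2z; ring.
split => //; by rewrite -HE b1z b2z b3z; ring.
Qed.

Lemma indep8 (a0 a1 a2 a3 a4 a5 a6 a7 : P) :
  inA a0 -> inA a1 -> inA a2 -> inA a3 -> inA a4 -> inA a5 -> inA a6 -> inA a7 ->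
  expr8 a0 a1 a2 a3 a4 a5 a6 a7 = 0 ->
  [/\ a0 = 0, a1 = 0, a2 = 0, a3 = 0 & [/\ a4 = 0, a5 = 0, a6 = 0 & a7 = 0]].
Proof.
move=> h0 h1 h2' h3 h4 h5 h6 h7 HF.
have HF' := congr1 (comp_mpoly TT) HF.
rewrite /expr8 /= comp_mpoly0 !(compM, compXn, comp_mpolyD, cX1, cX2) !invT // in HF'.
have HG1 : a2 + a4 * X1 + a6 * X1 ^+ 2 + a7 * X1 ^+ 3 = 0.
  apply: (cancelL X3_nz).
  by rewrite -(subrr 0) -{1}HF' -{1}HF /expr8; ring.
have [z2 z4 z6 z7] := indepL h2' h4 h6 h7 HG1.
have HG0 : a0 + a1 * X1 + a3 * X1 ^+ 2 + a5 * X1 ^+ 3 = 0.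
  by rewrite -HF /expr8 z2 z4 z6 z7; ring.
by have [z0 z1 z3 z5] := indepL h0 h1 h3 h5 HG0.
Qed.

Lemma sigma2 (f : P) : sigma (sigma f) = f \mPo [tuple X1 + X3; X2; X3].
Proof.
rewrite /sigma compT3 !(comp_mpolyD, cX1, cX2, cX3); congr (_ \mPo [tuple _; _; _]).
  by apply: (@char2 _ _ X2); ring.
by apply: (@char2 _ _ X3); ring.
Qed.

Lemma sigma4 (f : P) : sigma (sigma (sigma (sigma f))) = f.
Proof.
rewrite !sigma2 compT3 !(comp_mpolyD, cX1, cX2, cX3).
have -> : X1 + X3 + X3 = X1 by apply: (@char2 _ _ X3); ring.
rewrite -[RHS](comp_mpoly_id f); congr (_ \mPo _).
apply: eq_from_tnth => i; rewrite tnth_mktuple.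
case: i => [[|[|[|//]]] Hi]; rewrite /tnth /= /x1 /x2 /x3;
  by congr 'X__; apply: val_inj.
Qed.

Lemma sigmaB (f g : P) : sigma (f - g) = sigma f - sigma g.
Proof. exact: comp_mpolyB. Qed.

Lemma inK4 (f : P) : f \in @K4 k.
Proof.
rewrite unfold_in /K4 [iter _ _ _]/= /Delta !sigmaB sigma4; apply/eqP.
move: (sigma (sigma (sigma f))) => s3; move: (sigma (sigma f)) => s2.
move: (sigma f) => s1.
by apply: (@char2 _ _ (f - 2%:R * s3 + 3%:R * s2 - 2%:R * s1)); ring.
Qed.
End Proof.

Theorem proposition4p19 (k : fieldType) (hchar : 2%N \in [pchar k]) :
  (forall f : {mpoly k[3]}, f \in @K4 k) /\ free_A_basis (@K4 k) (@basisB k).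
Proof.
have h2 : (2%:R : {mpoly k[3]}) = 0.
  by rewrite -mpolyC_nat (pcharf0 hchar) mpolyC0.
split; first exact: inK4.
split; first by move=> i; apply: inK4.
split.
  by move=> f _; have [a [Ha ->]] := span_all h2 f; exists a.
move=> a Ha; rewrite sumB => H0 i.
have [z0 z1 z2 z3 [z4 z5 z6 z7]] := indep8 h2 (Ha _) (Ha _) (Ha _) (Ha _)
  (Ha _) (Ha _) (Ha _) (Ha _) H0.
rewrite -(inord_val i); case: i => [[|[|[|[|[|[|[|[|j]]]]]]]] Hj] //=.
Qed.
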